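(* Let $N_\mathrm{T},N_\mathrm{R},N_\mathrm{S}$ be positive integers, let $\mathbf{H}_\mathrm{D}\in\mathbb{C}^{N_\mathrm{R}\times N_\mathrm{T}}$, $\mathbf{H}_\mathrm{B}\in\mathbb{C}^{N_\mathrm{R}\times N_\mathrm{S}}$, $\mathbf{H}_\mathrm{F}\in\mathbb{C}^{N_\mathrm{S}\times N_\mathrm{T}}$, and for a scattering matrix $\mathbf{\Theta}\in\mathbb{C}^{N_\mathrm{S}\times N_\mathrm{S}}$ let $\mathbf{H}(\mathbf{\Theta})=\mathbf{H}_\mathrm{D}+\mathbf{H}_\mathrm{B}\mathbf{\Theta}\mathbf{H}_\mathrm{F}$. A BD-RIS may achieve a larger or a smaller MIMO DoF than a D-RIS. Precisely: (i) there exist $N_\mathrm{T},N_\mathrm{R},N_\mathrm{S}$ and channels $\mathbf{H}_\mathrm{D},\mathbf{H}_\mathrm{B},\mathbf{H}_\mathrm{F}$ such that $\max_{\mathbf{\Theta}\text{ BD}}\mathrm{DoF}(\mathbf{H}(\mathbf{\Theta}))>\max_{\mathbf{\Theta}\text{ D}}\mathrm{DoF}(\mathbf{H}(\mathbf{\Theta}))$; and (ii) there exist $N_\mathrm{T},N_\mathrm{R},N_\mathrm{S}$ and channels such that $\min_{\mathbf{\Theta}\text{ BD}}\mathrm{DoF}(\mathbf{H}(\mathbf{\Theta}))<\min_{\mathbf{\Theta}\text{ D}}\mathrm{DoF}(\mathbf{H}(\mathbf{\Theta}))$, where ''BD'' ranges over all unitary $\mathbf{\Theta}\in\mathbb{U}^{N_\mathrm{S}\times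 N_\mathrm{S}}$ (fully-connected BD-RIS) and ''D'' over all diagonal $\mathbf{\Theta}=\mathrm{diag}(e^{\jmath\theta_1},\ldots,e^{\jmath\theta_{N_\mathrm{S}}})$, $\theta_i\in\mathbb{R}$ (D-RIS).
   Context: $\mathbb{U}^{n\times n}$ denotes the set of $n\times n$ complex unitary matrices. The degrees of freedom of a matrix $\mathbf{H}$ are $\mathrm{DoF}(\mathbf{H})=\lim_{\rho\to\infty}\frac{\log\det(\mathbf{I}+\rho\mathbf{H}\mathbf{H}^\mathsf{H})}{\log\rho}$ (the number of parallel streams supported at asymptotically high SNR $\rho$). A diagonal RIS (D-RIS) has diagonal scattering matrix with unit-modulus diagonal entries; a fully-connected beyond-diagonal RIS (BD-RIS) has an arbitrary unitary scattering matrix. *)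

(* Defs.v *)
From HB Require Import structures.
From mathcomp Require Import all_boot all_order all_algebra.
From mathcomp Require Import all_classical all_reals all_analysis.
From mathcomp Require Import complex.
Set Implicit Arguments. Unset Strict Implicit. Unset Printing Implicit Defensive.
Import Order.TTheory GRing.Theory Num.Theory numFieldTopology.Exports numFieldNormedType.Exports.
Local Open Scope classical_set_scope.
Local Open Scope ring_scope.

Section Defs.
Variable R : realType.
Local Notation C := R[i].

Definition ctmx m n (A : 'M[C]_(m, n)) : 'M[C]_(n, m) :=
  \matrix_(i, j) conjc (A j i).

Definition unitary_mx n (Th : 'M[C]_n) : Prop :=
  Th *m ctmx Th = 1%:M /\ ctmx Th *m Th = 1%:M.

Definition diag_ris n (Th : 'M[C]_n) : Prop :=
  exists theta : 'I_n -> R,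
    Th = diag_mx (\row_k (cos (theta k) +i* sin (theta k))%C).

(* DoF(H) = lim_{rho -> +oo} log det(I + rho H H^H) / log rho.
   det(I + rho H H^H) is a (positive) real number; we take its real part. *)
Definition DoF m n (H : 'M[C]_(m, n)) : R :=
  lim ((fun rho : R =>
          ln (complex.Re (\det (1%:M + (rho%:C)%C *: (H *m ctmx H))))
          / ln rho) x @[x --> +oo%R]).

Definition Heff NT NR NS (HD : 'M[C]_(NR, NT)) (HB : 'M[C]_(NR, NS))
  (HF : 'M[C]_(NS, NT)) (Th : 'M[C]_NS) : 'M[C]_(NR, NT) :=
  HD + HB *m Th *m HF.
End Defs.

(* Main.v *)
Require Import Defs.
From HB Require Import structures.
From mathcomp Require Import all_boot all_order all_algebra.
From mathcomp Require Import all_classical all_reals all_analysis.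
From mathcomp Require Import complex.
From mathcomp Require Import ring lra.
Import Order.TTheory GRing.Theory Num.Theory.
Import numFieldTopology.Exports numFieldNormedType.Exports.
Local Open Scope classical_set_scope.
Local Open Scope ring_scope.

Section S.
Variable R : realType.
Local Notation C := R[i].

Lemma ratio_bound {x : R} : 2 <= x ->
  0 <= ln (1 + x) / ln x - 1 <= 2 / x.
Proof.
move=> x2.
have x0 : 0 < x by apply: lt_le_trans x2.
have xip : 0 < x^-1 by rewrite invr_gt0.
have lnx : 1 - x^-1 <= ln x.
  have h := @le_ln1Dx R (x^-1 - 1).
  rewrite addrCA subrr addr0 lnV ?posrE // in h.
  rewrite -[ln x]opprK -[1 - x^-1]opprB lerN2; apply: h.
  by rewrite -[X in X < _]add0r ltrD2r.
have xi : x^-1 <= 2^-1 by rewrite lef_pV2 ?posrE //.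
have lnxp : 2^-1 <= ln x.
  apply: le_trans lnx; rewrite lerBrDl -lerBrDr.
  have : (2:R)^-1 + 2^-1 = 1 by field.
  move: xi; lra.
have lnx0 : 0 < ln x by apply: lt_le_trans lnxp; rewrite invr_gt0.
have e : ln (1 + x) = ln x + ln (1 + x^-1).
  rewrite -lnM ?posrE ?addr_gt0 ?invr_gt0 //.
  by rewrite mulrDr mulr1 mulfV ?gt_eqF // addrC.
have h1 : 0 <= ln (1 + x^-1) by apply: ln_ge0; rewrite lerDl invr_ge0 ltW.
have h2 : ln (1 + x^-1) <= x^-1 by apply: le_ln1Dx; apply: lt_trans xip; rewrite ltrN10.
have -> : ln (1 + x) / ln x - 1 = ln (1 + x^-1) / ln x.
  by rewrite e mulrDl mulfV ?gt_eqF // addrC addKr.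
apply/andP; split; first by rewrite divr_ge0 // ltW.
rewrite [2 / x]mulrC.
apply: ler_pM => //; first by rewrite invr_ge0 ltW.
by rewrite -[X in _ <= X](invrK (2:R)) lef_pV2 ?posrE ?invr_gt0.
Qed.
End S.
Section S2.
Variable R : realType.
Lemma lim_ratio : (fun rho : R => ln (1 + rho) / ln rho) x @[x --> +oo] --> (1:R).
Proof.
apply/cvgrPdist_le => /= eps eps0.
near=> x.
have x2 : 2 <= x by near: x; apply: nbhs_pinfty_ge; rewrite num_real.
have xe : 2 / eps <= x by near: x; apply: nbhs_pinfty_ge; rewrite num_real.
have /andP[h1 h2] := @ratio_bound R x x2.
rewrite distrC ger0_norm //.
apply: (le_trans h2).
have x0 : 0 < x by apply: lt_le_trans x2.
by rewrite ler_pdivrMr // mulrC -ler_pdivrMr.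
Unshelve. all: by end_near.
Qed.
End S2.
Section S3.
Variable R : realType.
Local Notation C := R[i].
Lemma DoF_one (H : 'M[C]_(1,1)) : H *m ctmx H = 1%:M -> DoF H = 1.
Proof.
move=> HH; rewrite /DoF.
apply: cvg_lim => //.
apply: cvg_trans (lim_ratio R).
apply: near_eq_cvg; near=> rho.
rewrite HH scalemx1 -raddfD det_scalar1 /=.
done.
Unshelve. all: by end_near.
Qed.
Lemma DoF_zero m n : DoF (0 : 'M[C]_(m,n)) = 0.
Proof.
rewrite /DoF.
apply: cvg_lim => //.
have -> : (fun rho : R => ln (complex.Re (\det (1%:M + (rho%:C)%C *: ((0 : 'M[C]_(m,n)) *m ctmx 0))))
          / ln rho) = fun _ => 0.
  by apply: funext => rho; rewrite mul0mx scaler0 addr0 det1 /= ln1 mul0r.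
exact: cvg_cst.
Qed.
End S3.
Section S4.
Variable R : realType.
Local Notation C := R[i].
Definition HBm : 'M[C]_(1,2) := \matrix_(i,j) (j == ord0)%:R.
Definition HFm : 'M[C]_(2,1) := \matrix_(i,j) (i == ord_max)%:R.
Definition Pm : 'M[C]_2 := \matrix_(i,j) (i != j)%:R.

Lemma prodE (Th : 'M[C]_2) : HBm *m Th *m HFm = (Th ord0 ord_max)%:M.
Proof.
apply/matrixP => i j; rewrite !ord1 !mxE !big_ord_recl !big_ord0 !mxE /=.
rewrite !big_ord_recl !big_ord0 !mxE /=.
have -> : lift ord0 ord0 = ord_max :> 'I_2 by apply: val_inj.
by rewrite !(mul1r, mul0r, addr0, mulr0, mulr1, add0r).
Qed.

Lemma diag01 (Th : 'M[C]_2) : diag_ris Th -> Th ord0 ord_max = 0.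
Proof. by case=> t ->; rewrite !mxE. Qed.

Lemma P01 : Pm ord0 ord_max = 1.
Proof. by rewrite !mxE. Qed.

Lemma Punit : unitary_mx Pm.
Proof.
split; apply/matrixP => i j; rewrite !mxE !big_ord_recl !big_ord0 !mxE /=;
 have -> : lift ord0 ord0 = ord_max :> 'I_2 by apply: val_inj.
all: case: i => [[|[|i]] Hi] //; case: j => [[|[|j]] Hj] //=.
all: have e1 : (1 -i* 0)%C = 1 :> C by rewrite oppr0.
all: have e0 : ((-0)*i)%C = 0 :> C by rewrite oppr0.
all: by rewrite e1 e0 !(mul1r,mul0r,mulr1,mulr0,addr0,add0r).
Qed.

End S4.
Section S5.
Variable R : realType.
Local Notation C := R[i].
Lemma scal_unit (c : C) : c * c^*%C = 1 -> (c%:M : 'M[C]_(1,1)) *m ctmx c%:M = 1%:M.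
Proof.
move=> hc; apply/matrixP => i j; rewrite !ord1 !mxE big_ord1 !mxE /=.
by rewrite !mulr1n.
Qed.
Lemma HeffE (HD : 'M[C]_(1,1)) Th : Heff HD (HBm R) (HFm R) Th = HD + (Th ord0 ord_max)%:M.
Proof. by rewrite /Heff prodE. Qed.
Lemma diag0 : diag_ris (diag_mx (\row_k ((cos (0:R)) +i* sin (0:R))%C) : 'M[C]_2).
Proof. by exists (fun _ => 0). Qed.
End S5.

Theorem proposition1 (R : realType) :
  (* (i) max over BD-RIS of DoF > max over D-RIS of DoF *)
  (exists (NT NR NS : nat) (HD : 'M[R[i]]_(NR.+1, NT.+1))
          (HB : 'M[R[i]]_(NR.+1, NS.+1)) (HF : 'M[R[i]]_(NS.+1, NT.+1)),
      (exists ThBD : 'M[R[i]]_NS.+1, unitary_mx ThBD /\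
         (exists ThD0 : 'M[R[i]]_NS.+1, diag_ris ThD0 /\
            forall ThD, diag_ris ThD ->
              DoF (Heff HD HB HF ThD) <= DoF (Heff HD HB HF ThD0)) /\
         forall ThD : 'M[R[i]]_NS.+1, diag_ris ThD ->
           DoF (Heff HD HB HF ThD) < DoF (Heff HD HB HF ThBD)))
  /\
  (* (ii) min over BD-RIS of DoF < min over D-RIS of DoF *)
  (exists (NT NR NS : nat) (HD : 'M[R[i]]_(NR.+1, NT.+1))
          (HB : 'M[R[i]]_(NR.+1, NS.+1)) (HF : 'M[R[i]]_(NS.+1, NT.+1)),
      (exists ThBD : 'M[R[i]]_NS.+1, unitary_mx ThBD /\
         (exists ThD0 : 'M[R[i]]_NS.+1, diag_ris ThD0 /\
            forall ThD, diag_ris ThD ->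
              DoF (Heff HD HB HF ThD0) <= DoF (Heff HD HB HF ThD)) /\
         forall ThD : 'M[R[i]]_NS.+1, diag_ris ThD ->
           DoF (Heff HD HB HF ThBD) < DoF (Heff HD HB HF ThD))).
Proof.
have hD (HD : 'M[R[i]]_(1,1)) Th : diag_ris Th -> Heff HD (HBm R) (HFm R) Th = HD.
  by move=> d; rewrite HeffE diag01 // raddf0 addr0.
have hP (HD : 'M[R[i]]_(1,1)) : Heff HD (HBm R) (HFm R) (Pm R) = HD + 1%:M.
  by rewrite HeffE P01.
split.
- exists 0%N, 0%N, 1%N, 0, (HBm R), (HFm R), (Pm R); split; first exact: Punit.
  split.
    exists (diag_mx (\row_k ((cos (0:R)) +i* sin (0:R))%C)); split; first exact: diag0.
    by move=> ThD d; rewrite (hD _ ThD d) (hD _ _ (@diag0 R)); exact: lexx.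
  move=> ThD d; rewrite (hD _ ThD d) hP add0r DoF_zero DoF_one; first exact: ltr01.
  by apply: scal_unit; rewrite conjc1 mulr1.
- exists 0%N, 0%N, 1%N, (-1)%:M, (HBm R), (HFm R), (Pm R); split; first exact: Punit.
  split.
    exists (diag_mx (\row_k ((cos (0:R)) +i* sin (0:R))%C)); split; first exact: diag0.
    by move=> ThD d; rewrite (hD _ ThD d) (hD _ _ (@diag0 R)); exact: lexx.
  move=> ThD d; rewrite (hD _ ThD d) hP -raddfD addNr raddf0 DoF_zero DoF_one; first exact: ltr01.
  by apply: scal_unit; rewrite rmorphN1 mulrNN mulr1.
Qed.
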